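(* Let $d,s,t,\ell$ be nonnegative integers with $s\ge 1$, $d \geq 2t-3$ and $t \geq \max\{4, \ell+3\}$, and let $\theta_{t,\ell}\in\Theta_{t,\ell}$. For any two edges of $W_d(s)$, the number of subgraphs of $W_d(s)$ isomorphic to $\theta_{t,\ell}$ that contain both of these edges and contain exactly one hub vertex of $W_d(s)$ is at most \[ N= \begin{cases} \max\{s(t-3),\, t-2\}, & \text{if } \theta_{t,\ell} = F_t,\\ s(t-3), & \text{if } \theta_{t,\ell} \neq F_t \text{ and } \mathbf{X}(\theta_{t,\ell}) \text{ is symmetric},\\ 2s(t-3), & \text{if } \mathbf{X}(\theta_{t,\ell}) \text{ is asymmetric}. \end{cases} \]
   Context: For $d \ge 3$ and $s \ge 1$, the $s$-hubbed wheel $W_d(s) = \overline{K_s} + C_d$ has vertex set $\{u_1,\dots,u_s\} \cup \{v_1,\dots,v_d\}$, where $v_1v_2\cdots v_dv_1$ is a cycle, the hub vertices $u_1,\dots,u_s$ are pairwise non-adjacent, and every $u_a$ is adjacent to every $v_i$. Edges $u_av_i$ are spokes; edges $v_iv_{i+1}$ (indices mod $d$) are rim edges. For $t\ge 3$ and $0 \le \ell \le t-3$, $\Theta_{t,\ell}$ is the class of graphs $\theta_{t,\ell}$ obtained from a cycle $v_1v_2\cdots v_tv_1$ by adding exactly $\ell$ chords $v_1v_{i_1},\dots,v_1v_{i_\ell}$ with $2<i_1<\cdots<i_\ell<t$. Its vector is $\mathbf{X}(\theta_{t,\ell}) = (2, i_1, \dots, i_\ell, t)$. The graph (or its vector) is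 symmetric if $\ell = 0$ or $i_j + i_{\ell+1-j} = t+2$ for every $j \le (\ell+1)/2$, and asymmetric otherwise. The fan $F_t$ is $\theta_{t,t-3}$, i.e., the $t$-cycle with all chords $v_1v_i$, $3\le i\le t-1$. *)

(* Defs.v *)
From mathcomp Require Import all_boot all_order.
Set Implicit Arguments. Unset Strict Implicit. Unset Printing Implicit Defensive.

(* Vertices of the s-hubbed wheel W_d(s): hubs u_a = inl a (a : 'I_s),
   rim vertices v_{i+1} = inr i (i : 'I_d).  Edges are 2-element vertex sets. *)
Definition wV (s d : nat) : finType := ('I_s + 'I_d)%type.

Definition wheel_edges (s d : nat) : {set {set wV s d}} :=
  [set [set (inl a : wV s d); inr i] | a : 'I_s, i : 'I_d] :|:
  [set [set (inr i : wV s d); inr (ordS i)] | i : 'I_d].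

Definition vset (T : finType) (F : {set {set T}}) : {set T} := \bigcup_(e in F) e.

(* theta_{t,l} on vertices 'I_t (vertex k stands for v_{k+1}); cs is the list
   (i_1, ..., i_l) of chord endpoints: chords v_1 v_{i_j}. *)
Definition theta_adj (t : nat) (cs : seq nat) (i j : 'I_t) : bool :=
  (val j == (val i).+1 %% t) || ((val i == 0) && ((val j).+1 \in cs)).

Definition theta_edges (t : nat) (cs : seq nat) (T : finType) (f : 'I_t -> T)
  : {set {set T}} :=
  [set [set f p.1; f p.2] | p in [set p : 'I_t * 'I_t | theta_adj cs p.1 p.2]].

Definition theta_data (t l : nat) (cs : seq nat) : Prop :=
  [/\ size cs = l, sorted ltn cs & all (fun i => 2 < i < t) cs].

(* F is the edge set of a subgraph isomorphic to theta_{t,l}(cs)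
   (theta has no isolated vertices, so the subgraph is its edge set). *)
Definition is_theta_copy (t : nat) (cs : seq nat) (T : finType)
  (F : {set {set T}}) : bool :=
  [exists f : {ffun 'I_t -> T}, injectiveb f && (F == theta_edges cs f)].

Definition is_fan (t : nat) (cs : seq nat) : bool := cs == iota 3 (t - 3).

(* Symmetry of X = (2, i_1, ..., i_l, t): l = 0 or i_j + i_{l+1-j} = t+2
   for every 1 <= j <= (l+1)/2 (1-indexed; cs is 0-indexed). *)
Definition theta_symmetric (t : nat) (cs : seq nat) : bool :=
  let l := size cs in
  (l == 0) ||
  all (fun j => nth 0 cs j.-1 + nth 0 cs (l - j) == t + 2) (iota 1 l.+1./2).

Definition bound_N (s t : nat) (cs : seq nat) : nat :=
  if is_fan t cs then maxn (s * (t - 3)) (t - 2)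
  else if theta_symmetric t cs then s * (t - 3) else 2 * s * (t - 3).

(* Main.v *)
Require Import Defs.
From mathcomp Require Import all_boot all_order all_algebra.
From mathcomp Require Import zify ring.
Set Implicit Arguments. Unset Strict Implicit. Unset Printing Implicit Defensive.
Import GRing.Theory.

Section Zd.
Variable n : nat.
Local Open Scope ring_scope.

Lemma ordS1 (i : 'I_n.+2) : ordS i = i + 1.
Proof. by apply: val_inj => /=; rewrite modnDmr addn1. Qed.

Lemma valnat (k : nat) : val (k%:R : 'I_n.+2) = (k %% n.+2)%N.
Proof. by rewrite Zp_nat. Qed.

Lemma natr_inj (k1 k2 : nat) : (k1 < n.+2)%N -> (k2 < n.+2)%N ->
  (k1%:R : 'I_n.+2) = k2%:R -> k1 = k2.
Proof.
move=> h1 h2 /(congr1 val); rewrite !valnat !modn_small //.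
Qed.

Lemma addnat_inj (x : 'I_n.+2) (k1 k2 : nat) : (k1 < n.+2)%N -> (k2 < n.+2)%N ->
  x + k1%:R = x + k2%:R -> k1 = k2.
Proof. by move=> h1 h2 /addrI; apply: natr_inj. Qed.


End Zd.
Section Graph.
Variables (n s m : nat).
Hypothesis hD : (2 * m + 5 <= n.+2)%N.
Local Open Scope ring_scope.
Local Notation V := (wV s n.+2).

Definition spoke (a : 'I_s) (p : 'I_n.+2) : {set V} := [set inl a; inr p].
Definition rimE (p : 'I_n.+2) : {set V} := [set inr p; inr (p + 1)].
Fact G_key : unit. Proof. exact: tt. Qed.
Definition G : 'I_s -> 'I_n.+2 -> {set 'I_m.+3} -> {set {set V}} :=
  locked_with G_key (fun a r J =>
  [set spoke a (r + (val o)%:R) | o in J] :|: [set rimE (r + (val o)%:R) | o : 'I_m.+2]).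
Lemma GE a r J : G a r J =
  [set spoke a (r + (val o)%:R) | o in J] :|: [set rimE (r + (val o)%:R) | o : 'I_m.+2].
Proof. by rewrite /G unlock. Qed.

Lemma wheel_cases e : e \in wheel_edges s n.+2 ->
  (exists a p, e = spoke a p) \/ (exists p, e = rimE p).
Proof.
rewrite inE => /orP [/imset2P [a i _ _ ->] | /imsetP [i _ ->]].
  by left; exists a, i.
by right; exists i; rewrite /rimE ordS1.
Qed.

Lemma spoke_inj a p a' p' : spoke a p = spoke a' p' -> a = a' /\ p = p'.
Proof.
move=> E.
have h1 : (inl a : V) \in spoke a' p' by rewrite -E !inE eqxx.
have h2 : (inr p : V) \in spoke a' p' by rewrite -E !inE eqxx orbT.
move: h1 h2; rewrite !inE => /orP [/eqP [->]|//] /orP [//|/eqP [->]] //.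
Qed.

Lemma spoke_rim a p q : spoke a p <> rimE q.
Proof.
move=> E; have : (inl a : V) \in rimE q by rewrite -E !inE eqxx.
by rewrite !inE.
Qed.

Lemma one_neq0 : (1 : 'I_n.+2) != 0.
Proof. by []. Qed.

Lemma rimE_inj p q : rimE p = rimE q -> p = q.
Proof.
move=> E.
have : (inr p : V) \in rimE q by rewrite -E !inE eqxx.
rewrite !inE => /orP [/eqP [->] //|/eqP [Hp]].
have : (inr q : V) \in rimE p by rewrite E !inE eqxx.
rewrite Hp !inE => /orP [/eqP [] | /eqP []] H.
  have : q + 0%:R = q + 1%:R by rewrite addr0 {1}H.
  by move/addnat_inj => /(_ isT isT).
have : q + 0%:R = q + 2%:R by rewrite addr0 {1}H -addrA mulr2n.
have h2 : (2 < n.+2)%N by lia.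
by move/addnat_inj => /(_ isT h2).
Qed.

Lemma memG a r J e : e \in G a r J ->
  (exists o, o \in J /\ e = spoke a (r + (val o)%:R)) \/
  (exists o : 'I_m.+2, e = rimE (r + (val o)%:R)).
Proof.
rewrite GE inE => /orP [/imsetP [o oJ ->] | /imsetP [o _ ->]].
  by left; exists o.
by right; exists o.
Qed.

Lemma memG_spoke a r J a' p : spoke a' p \in G a r J ->
  a' = a /\ exists o, o \in J /\ p = r + (val o)%:R.
Proof.
case/memG => [[o [oJ /spoke_inj [-> ->]]] | [o /spoke_rim]] //.
by split=> //; exists o.
Qed.

Lemma memG_rim a r J p : rimE p \in G a r J ->
  exists o : 'I_m.+2, p = r + (val o)%:R.
Proof.
case/memG => [[o [oJ /esym /spoke_rim]] | [o /rimE_inj ->]] //.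
by exists o.
Qed.

Lemma card_lt (T : finType) (A B : {set T}) x :
  A \subset B -> x \in B -> x \notin A -> (#|A| < #|B|)%N.
Proof.
move=> AB xB xA; apply: proper_card; apply/properP; split=> //.
by exists x.
Qed.

Lemma count_rim a J y z : y <> z ->
  (#|[set r | (rimE y \in G a r J) && (rimE z \in G a r J)]| <= m.+1)%N.
Proof.
move=> yz; set R := [set r | _].
pose Q := [set o : 'I_m.+2 | y - (val o)%:R \in R].
have sub : R \subset [set y - (val o)%:R | o in Q].
  apply/subsetP => r rR; have := rR; rewrite inE => /andP [/memG_rim [o Ho] _].
  apply/imsetP; exists o; last by rewrite Ho addrK.
  by rewrite inE Ho addrK.
have notboth : ~ ((ord0 \in Q) /\ (ord_max \in Q)).
  rewrite !inE => [[/andP [_ /memG_rim [o1 H1]] /andP [_ /memG_rim [o2 H2]]]].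
  move: H1 H2; rewrite subr0 => H1 E; rewrite H1 in E yz.
  have : y + ((val o1) + m.+1)%:R = y + (val o2)%:R.
    have vm : \val (@ord_max m.+1) = m.+1 by [].
    by rewrite vm in E; rewrite natrD addrA E; ring.
  have l1 : (val o1 < m.+2)%N := ltn_ord o1.
  have l2 : (val o2 < m.+2)%N := ltn_ord o2.
  move/addnat_inj => E2.
  have E3 : (val o1 + m.+1)%N = val o2 by apply: E2; lia.
  have o10 : val o1 = 0%N by lia.
  by apply: yz; rewrite o10 addr0.
have cQ : (#|Q| < m.+2)%N.
  suff : (#|Q| < #|[set: 'I_m.+2]|)%N by rewrite cardsT card_ord.
  have [q0|q0] := boolP (ord0 \in Q).
    apply: (@card_lt _ Q [set: _] ord_max); [exact: subsetT | by rewrite inE |].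
    by apply/negP => qm; apply: notboth.
  by apply: (@card_lt _ Q [set: _] ord0); [exact: subsetT | by rewrite inE |].
apply: leq_trans (subset_leq_card sub) _.
apply: leq_trans (leq_imset_card _ _) _.
by rewrite -ltnS.
Qed.

Lemma count_spoke0 a a0 (J : {set 'I_m.+3}) x e : a <> a0 ->
  #|[set r | (spoke a0 x \in G a r J) && (e \in G a r J)]| = 0%N.
Proof.
move=> aa0; apply/eqP; rewrite cards_eq0; apply/eqP/setP => r.
rewrite !inE; apply/negP => /andP [/memG_spoke [E _] _].
by apply: aa0.
Qed.

Lemma count_spoke a a0 (J : {set 'I_m.+3}) x e : e <> spoke a0 x ->
  ord0 \in J -> ord_max \in J ->
  (#|[set r | (spoke a0 x \in G a r J) && (e \in G a r J)]| <= (#|J|).-1)%N.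
Proof.
move=> ex J0 Jm; set R := [set r | _].
pose Q := [set o in J | x - (val o)%:R \in R].
have sub : R \subset [set x - (val o)%:R | o in Q].
  apply/subsetP => r rR; have := rR; rewrite inE => /andP [/memG_spoke [_ [o [oJ Ho]]] _].
  apply/imsetP; exists o; last by rewrite Ho addrK.
  by rewrite inE oJ Ho addrK.
have vm : \val (@ord_max m.+2) = m.+2 by [].
have notboth : ~ ((ord0 \in Q) /\ (ord_max \in Q)).
  rewrite !inE => [[/andP [_ /andP [/memG_spoke [aa _] H1]] /andP [_ /andP [_ H2]]]].
  rewrite vm subr0 in H1 H2.
  subst a0.
  case/memG: H1 => [[o1 [_ E1]] | [o1 E1]]; case/memG: H2 => [[o2 [_ E2]] | [o2 E2]].
  - rewrite E1 in E2; case/spoke_inj: E2 => _ E.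
    have : x + ((val o1) + m.+2)%:R = x + (val o2)%:R.
      by rewrite natrD addrA E; ring.
    have l1 : (val o1 < m.+3)%N := ltn_ord o1.
    have l2 : (val o2 < m.+3)%N := ltn_ord o2.
    move/addnat_inj => E3.
    have E4 : (val o1 + m.+2)%N = val o2 by apply: E3; lia.
    have o10 : val o1 = 0%N by lia.
    by apply: ex; rewrite E1 o10 addr0.
  - by rewrite E1 in E2; move: E2; apply: spoke_rim.
  - by rewrite E2 in E1; move: E1; apply: spoke_rim.
  - rewrite E1 in E2; move/rimE_inj: E2 => E.
    have : x + ((val o1) + m.+2)%:R = x + (val o2)%:R.
      by rewrite natrD addrA E; ring.
    have l1 : (val o1 < m.+2)%N := ltn_ord o1.
    have l2 : (val o2 < m.+2)%N := ltn_ord o2.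
    move/addnat_inj => E3.
    have E4 : (val o1 + m.+2)%N = val o2 by apply: E3; lia.
    lia.
have cQ : (#|Q| < #|J|)%N.
  have QJ : Q \subset J by apply/subsetP => o; rewrite inE => /andP [].
  have [q0|q0] := boolP (ord0 \in Q).
    apply: (@card_lt _ Q J ord_max) => //.
    by apply/negP => qm; apply: notboth.
  by apply: (@card_lt _ Q J ord0).
apply: leq_trans (subset_leq_card sub) _.
apply: leq_trans (leq_imset_card _ _) _.
by rewrite -ltnS prednK // (leq_ltn_trans _ cQ).
Qed.
End Graph.

Lemma mod2 x k : (x < 2 * k)%N -> x %% k = if (x < k)%N then x else (x - k)%N.
Proof.
case: ifP => hx hk; first by rewrite modn_small.
have e : x = ((x - k) + k)%N by lia.
by rewrite {1}e modnDr modn_small //; lia.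
Qed.

Definition J0 (m : nat) (cs : seq nat) : {set 'I_m.+3} :=
  [set o : 'I_m.+3 | (\val o == 0%N) || (\val o == m.+2) || ((\val o).+2 \in cs)].
Definition J1 (m : nat) (cs : seq nat) : {set 'I_m.+3} :=
  [set o : 'I_m.+3 | (\val o == 0%N) || (\val o == m.+2) || ((m.+4 - \val o)%N \in cs)].

Section Chain.
Variables (n s m : nat) (cs : seq nat).
Hypothesis hD : (2 * m + 5 <= n.+2)%N.
Local Open Scope ring_scope.
Local Notation V := (wV s n.+2).
Local Notation t := m.+4.
Variables (f : 'I_t -> V) (h : 'I_t) (a : 'I_s) (g : 'I_t -> 'I_n.+2).
Hypothesis finj : injective f.
Hypothesis fh : f h = inl a.
Hypothesis fg : forall k, k != h -> f k = inr (g k).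
Hypothesis Fw : theta_edges cs f \subset wheel_edges s n.+2.

Definition W (j : nat) : 'I_t := inord ((h + j) %% t).

Lemma valW j : nat_of_ord (W j) = ((h + j) %% t)%N.
Proof. by rewrite /W inordK // ltn_pmod. Qed.

Lemma valW' j : \val (W j) = ((h + j) %% t)%N.
Proof. exact: valW. Qed.

Lemma W_neq j : (1 <= j <= m.+3)%N -> W j != h.
Proof.
move=> hj; apply/negP => /eqP /(congr1 (@nat_of_ord _)); rewrite valW mod2; last first.
  have := ltn_ord h; lia.
have := ltn_ord h; case: ifP; lia.
Qed.

Lemma W_inj j1 j2 : (j1 <= m.+3)%N -> (j2 <= m.+3)%N -> W j1 = W j2 -> j1 = j2.
Proof.
move=> h1 h2 /(congr1 (@nat_of_ord _)); rewrite !valW.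
have hh := ltn_ord h; rewrite !mod2; [case: ifP; case: ifP; lia | lia | lia].
Qed.

Lemma adj_edge i j : theta_adj cs i j -> [set f i; f j] \in wheel_edges s n.+2.
Proof.
move=> hij; apply: (subsetP Fw); apply/imsetP; exists (i, j) => //.
by rewrite inE.
Qed.

Lemma W_succ j : theta_adj cs (W j) (W j.+1).
Proof.
apply/orP; left; rewrite !valW'; apply/eqP.
by rewrite -[((h + j) %% t).+1]addn1 modnDml addn1 addnS.
Qed.

Lemma rim_pair u v : [set (inr u : V); inr v] \in wheel_edges s n.+2 -> u <> v ->
  v = u + 1 \/ u = v + 1.
Proof.
move=> /wheel_cases [[a' [p E]] | [p E]] uv.
  have : (inl a' : V) \in [set (inr u : V); inr v] by rewrite E !inE eqxx.
  by rewrite !inE.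
have hu : (inr u : V) \in rimE s p by rewrite -E !inE eqxx.
have hv : (inr v : V) \in rimE s p by rewrite -E !inE eqxx orbT.
move: hu hv uv; rewrite !inE => /orP [/eqP [->]|/eqP [->]] /orP [/eqP [->]|/eqP [->]].
- by move/(_ erefl).
- by left.
- by right.
- by move/(_ erefl).
Qed.

Definition X j := g (W j).

Lemma X_inj j1 j2 : (1 <= j1 <= m.+3)%N -> (1 <= j2 <= m.+3)%N -> X j1 = X j2 -> j1 = j2.
Proof.
move=> h1 h2 E; apply: W_inj; try lia.
apply: finj; rewrite !fg ?W_neq //; by rewrite /X in E; rewrite E.
Qed.

Lemma X_step j : (1 <= j <= m.+2)%N -> X j.+1 = X j + 1 \/ X j = X j.+1 + 1.
Proof.
move=> hj; apply: rim_pair.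
  by rewrite -!fg ?W_neq //; try lia; apply: adj_edge; apply: W_succ.
by move/X_inj; lia.
Qed.

Lemma X_lin : exists sg : 'I_n.+2, (sg = 1 \/ sg = -1) /\
  forall j, (1 <= j <= m.+3)%N -> X j = X 1 + sg *+ j.-1.
Proof.
pose sg := X 2 - X 1.
have hsg : sg = 1 \/ sg = -1.
  case: (X_step (j := 1%N) isT) => E; rewrite /sg E; [left|right]; ring.
have st : forall j, (1 <= j <= m.+2)%N -> X j.+1 = X j + sg.
  elim=> [//|j IH] hj.
  case: (posnP j) => [-> | jpos]; first by rewrite /sg; ring.
  have IH' := IH ltac:(lia).
  case: (X_step (j := j.+1) ltac:(lia)) => E.
    case: hsg => hs; first by rewrite E hs.
    exfalso; have : X j.+2 = X j by rewrite E IH' hs; ring.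
    by move/X_inj; lia.
  case: hsg => hs.
    exfalso; have : X j.+2 = X j.
      have : X j.+2 = X j.+1 - 1 by rewrite E; ring.
      by move=> ->; rewrite IH' hs; ring.
    by move/X_inj; lia.
  by rewrite E hs; ring.
exists sg; split=> //.
elim=> [//|j IH] hj.
case: (posnP j) => [-> | jpos]; first by rewrite /=; ring.
rewrite st; last lia.
rewrite IH; last lia.
have -> : j.+1.-1 = j.-1.+1 by lia.
by rewrite mulrSr /sg; ring.
Qed.


Lemma X_off : exists r (b : bool), forall j, (1 <= j <= m.+3)%N ->
  X j = r + (if b then j.-1 else (m.+3 - j)%N)%:R.
Proof.
have [sg [hs E]] := X_lin.
case: hs => hs.
  exists (X 1), true => j hj; rewrite E // hs.
  by [].
exists (X 1 - (m.+2)%:R), false => j hj; rewrite E // hs.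
have e : m.+2 = (j.-1 + (m.+3 - j))%N by lia.
have -> : (m.+2)%:R = (j.-1)%:R + (m.+3 - j)%:R :> 'I_n.+2 by rewrite -natrD -e.
rewrite mulNrn; ring.
Qed.

Definition dk (k : 'I_t) : nat := if (h < k)%N then (k - h)%N else (k + t - h)%N.

Lemma dk_prop k : k != h -> W (dk k) = k /\ (1 <= dk k <= m.+3)%N.
Proof.
move=> kh.
have hk : nat_of_ord k <> nat_of_ord h by move=> E; move: kh; rewrite (val_inj E) eqxx.
have hh := ltn_ord h; have kk := ltn_ord k.
split; last by rewrite /dk; case: ifP; lia.
apply: val_inj; rewrite /= valW /dk; case: ifP => hlt.
  by rewrite modn_small; lia.
rewrite mod2; last lia.
case: ifP; lia.
Qed.

Hypothesis hcs : all (fun i => (2 < i < t)%N) cs.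

Lemma adj_irr (k : 'I_t) : ~~ theta_adj cs k k.
Proof.
rewrite /theta_adj negb_or; apply/andP; split.
  have kk : (\val k < t)%N := ltn_ord k.
  rewrite mod2; last lia.
  by case: ifP; lia.
apply/negP => /andP [/eqP k0]; rewrite k0 => c1.
by have := allP hcs _ c1.
Qed.

Section RB.
Variables (r : 'I_n.+2) (b : bool).
Definition off (j : nat) : nat := if b then j.-1 else (m.+3 - j)%N.
Hypothesis hX : forall j, (1 <= j <= m.+3)%N -> X j = r + (off j)%:R.

Definition Pos (k : 'I_t) := off (dk k).

Lemma gpos k : k != h -> g k = r + (Pos k)%:R.
Proof.
move=> kh; have [E1 E2] := dk_prop kh.
by rewrite /Pos -hX // /X E1.
Qed.

Lemma Pos_lt k : k != h -> (Pos k <= m.+2)%N.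
Proof. by move=> kh; have [_ E2] := dk_prop kh; rewrite /Pos /off; case: b; lia. Qed.

Lemma ne_val (k : 'I_t) : k != h -> nat_of_ord k <> nat_of_ord h.
Proof. by move=> kh E; move: kh; rewrite (val_inj E) eqxx. Qed.

Lemma dk_succ (i j : 'I_t) : i != h -> j != h -> nat_of_ord j = ((nat_of_ord i).+1 %% t)%N ->
  dk j = (dk i).+1.
Proof.
move=> ih jh; have := ne_val ih; have := ne_val jh.
have ii := ltn_ord i; have jj := ltn_ord j; have hh := ltn_ord h.
rewrite mod2; last lia.
rewrite /dk; case: ifP; case: ifP; case: ifP; lia.
Qed.

Lemma Pos_succ k1 k2 : k1 != h -> k2 != h -> g k2 = g k1 + 1 ->
  (dk k2 = (dk k1).+1 /\ b) \/ (dk k1 = (dk k2).+1 /\ ~~ b).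
Proof.
move=> h1 h2; rewrite !gpos // => E.
have : r + (Pos k2)%:R = r + (Pos k1).+1%:R by rewrite E mulrSr addrA.
have l1 := Pos_lt h1; have l2 := Pos_lt h2.
move/addnat_inj => E2; have E3 : Pos k2 = (Pos k1).+1 by apply: E2; lia.
have [_ d1] := dk_prop h1; have [_ d2] := dk_prop h2.
move: E3; rewrite /Pos /off; case: b => E3; [left | right]; split => //; lia.
Qed.

Lemma adj_ends (i j : 'I_t) : theta_adj cs i j -> i != h -> j != h ->
  nat_of_ord j = ((nat_of_ord i).+1 %% t)%N.
Proof.
move=> /orP [/eqP -> //| /andP [/eqP i0 jc]] ih jh.
exfalso.
have jr : (2 < (nat_of_ord j).+1 < t)%N := allP hcs _ jc.
have ij : i != j by apply/negP => /eqP E; move: jr; rewrite -E i0.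
have : [set f i; f j] \in wheel_edges s n.+2.
  by apply: adj_edge; apply/orP; right; rewrite i0 eqxx.
rewrite (fg ih) (fg jh) => /rim_pair.
have gij : g i <> g j.
  move=> E; have ije : i = j by apply: finj; rewrite (fg ih) (fg jh) E.
  by move: ij; rewrite ije eqxx.
move=> /(_ gij) [E|E].
  have := Pos_succ ih jh E.
  have := ne_val ih; have := ne_val jh.
  have jj := ltn_ord j; have hh := ltn_ord h.
  have i0' : nat_of_ord i = 0%N by [].
  move: jr; rewrite /dk; case: ifP; case: ifP; lia.
have := Pos_succ jh ih E.
have := ne_val ih; have := ne_val jh.
have jj := ltn_ord j; have hh := ltn_ord h.
have i0' : nat_of_ord i = 0%N by [].
move: jr; rewrite /dk; case: ifP; case: ifP; lia.
Qed.


Definition invo (o : nat) : nat := if b then o.+1 else (m.+3 - o)%N.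
Definition Aj (jj : nat) : bool := theta_adj cs h (W jj) || theta_adj cs (W jj) h.

Lemma set2C (T : finType) (x y : T) : [set x; y] = [set y; x].
Proof. by apply/setP => z; rewrite !inE orbC. Qed.

Lemma F_eq_G (J : {set 'I_m.+3}) : (forall o : 'I_m.+3, (o \in J) = Aj (invo o)) ->
  theta_edges cs f = G a r J.
Proof.
move=> HJ; apply/setP => e; apply/idP/idP.
  move/imsetP => [[i j] /=]; rewrite inE /= => hij ->.
  case: (eqVneq i h) => [ei | ih]; case: (eqVneq j h) => [ej | jh].
  - by move: hij; rewrite ei ej (negbTE (adj_irr h)).
  - rewrite ei fh (fg jh) (gpos jh).
    have l1 : (Pos j < m.+3)%N by have := Pos_lt jh; lia.
    rewrite GE inE; apply/orP; left; apply/imsetP; exists (Ordinal l1) => //.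
    rewrite HJ /= /Aj.
    have [E1 E2] := dk_prop jh.
    have -> : invo (Pos j) = dk j by rewrite /invo /Pos /off; case: b; lia.
    by rewrite E1 -ei hij.
  - rewrite ej fh (fg ih) (gpos ih) set2C.
    have l1 : (Pos i < m.+3)%N by have := Pos_lt ih; lia.
    rewrite GE inE; apply/orP; left; apply/imsetP; exists (Ordinal l1) => //.
    rewrite HJ /= /Aj.
    have [E1 E2] := dk_prop ih.
    have -> : invo (Pos i) = dk i by rewrite /invo /Pos /off; case: b; lia.
    by rewrite E1 -ej hij orbT.
  - have hs := adj_ends hij ih jh.
    have ds := dk_succ ih jh hs.
    have [_ d1] := dk_prop ih; have [_ d2] := dk_prop jh.
    rewrite (fg ih) (fg jh) (gpos ih) (gpos jh) GE inE; apply/orP; right.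
    apply/imsetP; rewrite /Pos /off; case: b.
      have l1 : ((dk i).-1 < m.+2)%N by lia.
      exists (Ordinal l1) => //=.
      rewrite /rimE ds -addrA -mulrSr.
      by have -> : (dk i).-1.+1 = dk i by lia.
    have l1 : ((m.+3 - (dk i).+1) < m.+2)%N by lia.
    exists (Ordinal l1) => //=.
    rewrite /rimE ds set2C -addrA -mulrSr.
    by have -> : (m.+3 - (dk i).+1).+1 = (m.+3 - dk i)%N by lia.
rewrite GE inE => /orP [/imsetP [o oJ ->] | /imsetP [o _ ->]].
  rewrite HJ /Aj in oJ.
  have oo : (nat_of_ord o < m.+3)%N := ltn_ord o.
  have ij : (1 <= invo o <= m.+3)%N by rewrite /invo; case: b; lia.
  have kh := W_neq ij.
  have gk : g (W (invo o)) = r + (nat_of_ord o)%:R.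
    rewrite -/(X _) hX // /off /invo; case: b => //.
    by have -> : (m.+3 - (m.+3 - o))%N = nat_of_ord o by lia.
  have fk : f (W (invo o)) = inr (r + (nat_of_ord o)%:R) by rewrite fg // gk.
  case/orP: oJ => adj; apply/imsetP.
    by exists (h, W (invo o)); [rewrite inE | rewrite /= fh fk].
  by exists (W (invo o), h); [rewrite inE | rewrite /= fh fk set2C].
have oo : (nat_of_ord o < m.+2)%N := ltn_ord o.
pose j1 := if b then o.+1 else (m.+2 - o)%N.
have ij1 : (1 <= j1 <= m.+2)%N by rewrite /j1; case: b; lia.
have k1h : W j1 != h by apply: W_neq; lia.
have k2h : W j1.+1 != h by apply: W_neq; lia.
have g1 : g (W j1) = r + (off j1)%:R by rewrite -/(X _) hX //; lia.
have g2 : g (W j1.+1) = r + (off j1.+1)%:R by rewrite -/(X _) hX //; lia.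
apply/imsetP; exists (W j1, W j1.+1); first by rewrite inE; exact: W_succ.
rewrite /= (fg k1h) (fg k2h) g1 g2 /rimE /off /j1.
case: b.
  by rewrite /= -addrA -mulrSr.
have -> : (m.+3 - (m.+2 - o))%N = (nat_of_ord o).+1 by lia.
have -> : (m.+3 - (m.+2 - o).+1)%N = nat_of_ord o by lia.
by rewrite set2C -addrA -mulrSr.
Qed.

Lemma chord_h c : c \in cs -> nat_of_ord h <> 0%N -> c = (nat_of_ord h).+1.
Proof.
move=> cc h0.
have cr : (2 < c < t)%N := allP hcs _ cc.
case: (eqVneq (c.-1) (nat_of_ord h)) => [<-|ch]; first by lia.
exfalso.
pose i0 : 'I_t := ord0.
have jlt : (c.-1 < t)%N by lia.
pose j : 'I_t := Ordinal jlt.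
have adj : theta_adj cs i0 j.
  apply/orP; right; apply/andP; split => //=.
  by have -> : c.-1.+1 = c by lia.
have i0h : i0 != h by apply/negP => /eqP E; apply: h0; rewrite -E.
have jh : j != h by apply/negP => /eqP E; move: ch; rewrite -E eqxx.
have := adj_ends adj i0h jh.
rewrite /= modn_small //; lia.
Qed.

Lemma modS_t x : (x < t)%N -> (x.+1 %% t)%N = if (x.+1 < t)%N then x.+1 else 0%N.
Proof. by move=> hx; rewrite mod2; [case: ifP; lia | lia]. Qed.

Lemma Jset_ok : exists J, (J = J0 m cs \/ J = J1 m cs) /\
  forall o : 'I_m.+3, (o \in J) = Aj (invo o).
Proof.
have hh : (\val h < t)%N := ltn_ord h.
have Wl : forall jj, (\val (W jj) < t)%N := fun jj => ltn_ord (W jj).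
case: (eqVneq (\val h) 0%N) => h0.
  exists (if b then J0 m cs else J1 m cs); split; first by case: b; [left|right].
  move=> o; have oo : (\val o < m.+3)%N := ltn_ord o.
  rewrite /Aj /theta_adj /invo; case: b; rewrite inE h0 (modn_small (isT : (1 < m.+4)%N)).
    have eWo : \val (W o.+1) = (\val o).+1 by rewrite valW' h0 add0n modn_small //; lia.
    rewrite eWo modS_t; last lia.
    case: ifP => ?; lia.
  have eWo : \val (W (m.+3 - o)) = (m.+3 - \val o)%N.
    by rewrite valW' h0 add0n modn_small //; lia.
  have e1 : (m.+3 - \val o).+1 = (m.+4 - \val o)%N by lia.
  rewrite eWo e1 mod2; last lia.
  case: ifP => ?; lia.
have csE : forall x, (x \in cs) = (x == (\val h).+1) && ((\val h).+1 \in cs).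
  have h0' : nat_of_ord h <> 0%N by apply/eqP.
  move=> x; apply/idP/idP => [xc|/andP [/eqP -> //]].
  by rewrite {1}(chord_h xc h0') eqxx /= -(chord_h xc h0').
move: csE; move Hc : ((\val h).+1 \in cs) => H1 csE.
exists (if b then J1 m cs else J0 m cs); split; first by case: b; [right|left].
move=> o; have oo : (\val o < m.+3)%N := ltn_ord o.
have vo : \val o = nat_of_ord o := erefl.
have vh : \val h = nat_of_ord h := erefl.
have ij : (1 <= invo o <= m.+3)%N by rewrite /invo; case: b; lia.
have eW : \val (W (invo o)) = if (\val h + invo o < t)%N then (\val h + invo o)%N
   else (\val h + invo o - t)%N by rewrite valW' mod2 //; lia.
move: eW ij; rewrite /Aj /theta_adj /invo; case: b => eW ij;
  rewrite inE !csE !modS_t ?Wl // eW; repeat (case: ifP => ?); lia.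
Qed.
End RB.
End Chain.

Lemma structure n s m (cs : seq nat) : (2 * m + 5 <= n.+2)%N ->
  all (fun i => (2 < i < m.+4)%N) cs ->
  forall F : {set {set wV s n.+2}},
  F \subset wheel_edges s n.+2 -> is_theta_copy m.+4 cs F ->
  #|[set a : 'I_s | (inl a : wV s n.+2) \in vset F]| == 1%N ->
  exists a r, F = G a r (J0 m cs) \/ F = G a r (J1 m cs).
Proof.
move=> hD hcs F Fw /existsP [ff /andP [/injectiveP finj /eqP FE]] /cards1P [a Ea].
pose f := fun k => ff k.
have finj' : injective f by [].
have vs1 : forall x, x \in vset F -> exists k, f k = x.
  move=> x /bigcupP [e]; rewrite FE => /imsetP [[i j] _ ->].
  by rewrite !inE => /orP [/eqP ->|/eqP ->]; [exists i | exists j].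
have vs2 : forall k, f k \in vset F.
  move=> k; apply/bigcupP.
  have kl : ((k.+1 %% m.+4) < m.+4)%N by rewrite ltn_pmod.
  exists [set f k; f (Ordinal kl)]; last by rewrite !inE eqxx.
  by rewrite FE; apply/imsetP; exists (k, Ordinal kl); rewrite // inE /theta_adj /= eqxx.
have aF : (inl a : wV s n.+2) \in vset F.
  by have := set11 a; rewrite -Ea inE.
have [h fh] := vs1 _ aF.
have uniq_a : forall a', (inl a' : wV s n.+2) \in vset F -> a' = a.
  move=> a' H; suff : a' \in [set a] by rewrite inE => /eqP.
  by rewrite -Ea inE.
pose g := fun k => match f k with inr p => p | inl _ => 0%R end.
have fg : forall k, k != h -> f k = inr (g k).
  move=> k kh; rewrite /g; case E: (f k) => [a'|p] //.
  have := uniq_a a'; rewrite -E => /(_ (vs2 k)) ea.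
  by move: kh; rewrite (finj' k h) ?eqxx // E fh ea.
have Fw' : theta_edges cs f \subset wheel_edges s n.+2 by rewrite -FE.
have [r [b hX]] := X_off hD finj' fg Fw'.
have [J [HJ HJo]] := Jset_ok hD finj' fg Fw' hcs hX.
exists a, r.
have := F_eq_G hD finj' fh fg Fw' hcs hX HJo.
rewrite -FE => ->.
by case: HJ => ->; [left|right].
Qed.

Section CS.
Variables (m : nat) (cs : seq nat).
Hypothesis hsort : sorted ltn cs.
Hypothesis hcs : all (fun i => (2 < i < m.+4)%N) cs.

Lemma J0_full : J0 m cs = [set: 'I_m.+3] -> is_fan m.+4 cs.
Proof.
move=> E; apply/eqP; rewrite [(m.+4 - 3)%N]/=.
apply: (irr_sorted_eq ltn_trans ltnn hsort (iota_ltn_sorted 3 m.+1)) => x.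
rewrite mem_iota; apply/idP/idP => [xc | xr].
  by have := allP hcs _ xc; lia.
have xl : (x - 2 < m.+3)%N by lia.
have : Ordinal xl \in J0 m cs by rewrite E inE.
rewrite inE /=.
have -> : (x - 2).+2 = x by lia.
case/orP => [/orP [] | //]; lia.
Qed.

Lemma fan_full : is_fan m.+4 cs -> J0 m cs = [set: 'I_m.+3] /\ J1 m cs = [set: 'I_m.+3].
Proof.
move=> /eqP E.
split; apply/setP => o; rewrite !inE /= E mem_iota; have oo := ltn_ord o; lia.
Qed.

Lemma J1_rev : J1 m cs = (@rev_ord m.+3) @^-1: J0 m cs.
Proof.
apply/setP => o; rewrite !inE /=.
have oo := ltn_ord o.
have -> : (m.+3 - o.+1).+2 = (m.+4 - o)%N by lia.
lia.
Qed.

Lemma card_J1 : #|J1 m cs| = #|J0 m cs|.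
Proof. by rewrite J1_rev card_preimset //; exact: rev_ord_inj. Qed.

Lemma sym_closed : theta_symmetric m.+4 cs -> forall c, c \in cs -> ((m + 6) - c)%N \in cs.
Proof.
rewrite /theta_symmetric => /orP [/eqP s0 | /allP H] c cc.
  by move: cc; case: cs s0.
have [i il ci] := nthP 0%N cc.
move: H il; rewrite -divn2; move El : (size cs) => l H il.
have key : forall j, (j < l)%N -> (j < l.+1 %/ 2)%N ->
    (nth 0 cs j + nth 0 cs (l - j.+1) = (m + 6))%N.
  move=> j jl jh; have := H j.+1; rewrite mem_iota.
  move=> /(_ ltac:(lia)) /eqP /= E; lia.
case: (ltnP i (l.+1 %/ 2)) => hi.
  have := key i il hi; rewrite ci => E.
  have -> : ((m + 6) - c)%N = nth 0 cs (l - i.+1) by lia.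
  by apply: mem_nth; rewrite El; lia.
have hi' : (l - i.+1 < l.+1 %/ 2)%N by lia.
have := key (l - i.+1) ltac:(lia) hi'.
have -> : (l - (l - i.+1).+1)%N = i by lia.
rewrite ci => E.
have -> : ((m + 6) - c)%N = nth 0 cs (l - i.+1) by lia.
by apply: mem_nth; rewrite El; lia.
Qed.

Lemma sym_help : theta_symmetric m.+4 cs -> forall v, (v < m.+3)%N ->
  (v.+2 \in cs) = ((m.+4 - v)%N \in cs).
Proof.
move=> hs v hv; have sc := sym_closed hs.
apply/idP/idP => H.
  by have := sc _ H; have -> : ((m + 6) - v.+2)%N = (m.+4 - v)%N by lia.
by have := sc _ H; have -> : ((m + 6) - (m.+4 - v))%N = v.+2 by lia.
Qed.

Lemma sym_J : theta_symmetric m.+4 cs -> J0 m cs = J1 m cs.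
Proof.
move=> hs; apply/setP => o; rewrite !inE sym_help //.
exact: ltn_ord.
Qed.
End CS.

Lemma card_bigcup_le (I T : finType) (F : I -> {set T}) :
  #|\bigcup_i F i| <= \sum_i #|F i|.
Proof.
elim/big_rec2: _ => [|i x y _ IH]; first by rewrite cards0.
by apply: leq_trans (leq_card_setU _ _).1 _; rewrite leq_add2l.
Qed.

Lemma sum_le_const s (P : 'I_s -> nat) c : (forall a, P a <= c) -> \sum_a P a <= s * c.
Proof.
move=> H; apply: (@leq_trans (\sum_(a : 'I_s) c)); first by apply: leq_sum => a _.
by rewrite sum_nat_const card_ord mulnC.
Qed.

Lemma sum_single s (P : 'I_s -> nat) a0 : (forall a, a != a0 -> P a = 0) ->
  \sum_a P a = P a0.
Proof.
move=> H; rewrite (bigD1 a0) //= big1 ?addn0 // => a /H.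
Qed.

Section Main.
Variables (n s m : nat) (cs : seq nat).
Hypothesis hD : 2 * m + 5 <= n.+2.
Hypothesis hcs : all (fun i => 2 < i < m.+4) cs.
Variables (e1 e2 : {set wV s n.+2}).
Hypothesis e1w : e1 \in wheel_edges s n.+2.
Hypothesis e2w : e2 \in wheel_edges s n.+2.
Hypothesis e12 : e1 != e2.

Definition Sset := [set F : {set {set wV s n.+2}} |
        [&& F \subset wheel_edges s n.+2,
            is_theta_copy m.+4 cs F,
            e1 \in F, e2 \in F &
            #|[set a : 'I_s | (inl a : wV s n.+2) \in vset F]| == 1]].

Definition R a (J : {set 'I_m.+3}) := [set r | (e1 \in G a r J) && (e2 \in G a r J)].

Lemma S_sub : Sset \subset \bigcup_a ([set G a r (J0 m cs) | r in R a (J0 m cs)] :|: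
                                        [set G a r (J1 m cs) | r in R a (J1 m cs)]).
Proof.
apply/subsetP => F; rewrite inE => /and5P [Fw Fc F1 F2 Fh].
have [a [r E]] := structure hD hcs Fw Fc Fh.
apply/bigcupP; exists a => //; rewrite inE.
case: E => E; apply/orP; [left|right]; apply/imsetP; exists r => //;
  by rewrite inE -E F1 F2.
Qed.

Lemma S_card : #|Sset| <= \sum_a (#|R a (J0 m cs)| + #|R a (J1 m cs)|).
Proof.
apply: leq_trans (subset_leq_card S_sub) _.
apply: leq_trans (card_bigcup_le _) _.
apply: leq_sum => a _.
apply: leq_trans (leq_card_setU _ _).1 _.
by apply: leq_add; apply: leq_imset_card.
Qed.

Lemma S_card_sym : J0 m cs = J1 m cs -> #|Sset| <= \sum_a #|R a (J0 m cs)|.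
Proof.
move=> EJ.
apply: leq_trans (subset_leq_card S_sub) _.
apply: leq_trans (card_bigcup_le _) _.
apply: leq_sum => a _.
by rewrite -EJ setUid; apply: leq_imset_card.
Qed.

Lemma cases_R :
  (forall a J, #|R a J| <= m.+1) \/
  (exists a0, forall J : {set 'I_m.+3}, ord0 \in J -> ord_max \in J ->
     (forall a, a != a0 -> #|R a J| = 0) /\ #|R a0 J| <= (#|J|).-1).
Proof.
have hn : 2 * m + 5 <= n.+2 := hD.
case/wheel_cases: e1w => [[a0 [x E1]] | [y E1]].
  right; exists a0 => J J0 Jm; split.
    by move=> a /eqP aa; rewrite /R E1; apply: count_spoke0.
  rewrite /R E1; apply: count_spoke => // E2.
  by move: e12; rewrite E1 E2 eqxx.
case/wheel_cases: e2w => [[a0 [x E2]] | [z E2]].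
  right; exists a0 => J J0 Jm.
  have RE : forall a, R a J = [set r | (spoke a0 x \in G a r J) && (e1 \in G a r J)].
    by move=> a; apply/setP => r; rewrite !inE E2 andbC.
  split.
    by move=> a /eqP aa; rewrite RE; apply: count_spoke0.
  rewrite RE; apply: count_spoke => // E.
  by move: e12; rewrite E E2 eqxx.
left => a J; rewrite /R E1 E2; apply: count_rim => // yz.
by move: e12; rewrite E1 E2 yz eqxx.
Qed.


Hypothesis hsort : sorted ltn cs.
Hypothesis hs : 1 <= s.

Lemma final_bound : #|Sset| <= bound_N s m.+4 cs.
Proof.
have o0 : forall J, J = J0 m cs \/ J = J1 m cs -> (ord0 \in J) && (ord_max \in J).
  by move=> J [->|->]; apply/andP; split; rewrite inE /= ?eqxx ?orbT.
have [o00 o0m] : ord0 \in J0 m cs /\ ord_max \in J0 m cs by apply/andP; apply: o0; left.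
have [o10 o1m] : ord0 \in J1 m cs /\ ord_max \in J1 m cs by apply/andP; apply: o0; right.
have cJ0 : #|J0 m cs| <= m.+3 by have := max_card (J0 m cs); rewrite card_ord.
have cJ1 := card_J1 hsort hcs.
have nf : ~~ is_fan m.+4 cs -> #|J0 m cs| <= m.+2.
  move=> nfan; rewrite leqNgt; apply/negP => c3.
  apply: (negP nfan); apply: (J0_full hsort hcs).
  apply/eqP; rewrite eqEcard subsetT cardsT card_ord; lia.
rewrite /bound_N [(m.+4 - 3)%N]/= [(m.+4 - 2)%N]/=.
case: ifP => fan.
  have [F0 F1] := fan_full hsort hcs fan.
  have EJ : J0 m cs = J1 m cs by rewrite F0 F1.
  apply: leq_trans (S_card_sym EJ) _.
  case: cases_R => [H | [a0 H]].
    by apply: leq_trans (sum_le_const (fun a => H a _)) _; rewrite leq_maxl.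
  have [H1 H2] := H _ o00 o0m.
  rewrite (sum_single H1); apply: leq_trans H2 _.
  by rewrite F0 cardsT card_ord leq_maxr.
case: ifP => sym.
  have EJ := sym_J hsort hcs sym.
  apply: leq_trans (S_card_sym EJ) _.
  case: cases_R => [H | [a0 H]].
    exact: (sum_le_const (fun a => H a _)).
  have [H1 H2] := H _ o00 o0m.
  rewrite (sum_single H1); apply: leq_trans H2 _.
  have := nf (negbT fan); have : m.+1 <= s * m.+1 by rewrite leq_pmull.
  lia.
apply: leq_trans S_card _.
case: cases_R => [H | [a0 H]].
  apply: leq_trans (sum_le_const (P := fun a => #|R a (J0 m cs)| + #|R a (J1 m cs)|)
     (c := m.+1 + m.+1) _) _.
    by move=> a; apply: leq_add; apply: H.
  lia.
have [H1 H2] := H _ o00 o0m.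
have [H3 H4] := H _ o10 o1m.
rewrite (sum_single (a0 := a0)); last first.
  by move=> a aa; rewrite H1 // H3.
have := nf (negbT fan); have : m.+1 <= s * m.+1 by rewrite leq_pmull.
lia.
Qed.
End Main.

Theorem lemma2p1 (d s t l : nat) (cs : seq nat) :
  1 <= s -> 2 * t - 3 <= d -> 4 <= t -> l + 3 <= t ->
  theta_data t l cs ->
  forall e1 e2 : {set wV s d},
    e1 \in wheel_edges s d -> e2 \in wheel_edges s d -> e1 != e2 ->
    #|[set F : {set {set wV s d}} |
        [&& F \subset wheel_edges s d,
            is_theta_copy t cs F,
            e1 \in F, e2 \in F &
            #|[set a : 'I_s | (inl a : wV s d) \in vset F]| == 1]]|
    <= bound_N s t cs.
Proof.
move=> hs hd ht hl [_ hsort hcs] e1 e2 e1w e2w e12.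
case: t hd ht hl hsort hcs => [|[|[|[|m]]]] hd ht hl hsort hcs //.
case: d hd e1 e2 e1w e2w e12 => [|[|n]] hd e1 e2 e1w e2w e12; try lia.
have hD : 2 * m + 5 <= n.+2 by lia.
exact: (final_bound hD hcs e1w e2w e12 hsort hs).
Qed.
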